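(* Let $G=(\Sigma,S,s_0,\delta)$ be a commutative grammar. If $D$ is a simple cycle or a skeleton run of $G$, then $\|\mathrm{out}(D)\|=O\!\left(2^{|S|^{O(1)}}\right)$, where the implicit constants are absolute (independent of $G$ and $D$).
   Context: For $v\in\mathbb{N}^X$, $|v|=\sum_x v(x)$ and $\|v\|=\max_x v(x)$. A commutative grammar is $G=(\Sigma,S,s_0,\delta)$ with finite alphabet $\Sigma$, finite state set $S$, $s_0\in S$, and a finite set $\delta\subseteq S\times\mathbb{N}^\Sigma\times\mathbb{N}^S$ of transitions $\tau=(s,a,t)$ ($\mathrm{source}(\tau)=s$, $\mathrm{out}(\tau)=a$, $\mathrm{target}(\tau)=t$); every state is the source of some transition, and every transition has $|a|\le1$, $|t|\le2$. For $D\in\mathbb{N}^\delta$ let $\mathrm{source}(D)(s)=\sum_{\mathrm{source}(\tau)=s}D(\tau)$, $\mathrm{out}(D)=\sum_\tau D(\tau)\mathrm{out}(\tau)$, $\mathrm{target}(D)=\sum_\tau D(\tau)\mathrm{target}(\tau)$, $\mathrm{supp}(D)=\{s:\mathrm{source}(D)(s)>0\}$. $D$ is connected from $s$ if every $t\in\mathrm{supp}(D)$ equals $s$ or is reachable by transitions $\tau_1,\ldots,\tau_m$ with $D(\tau_i)>0$, $\mathrm{source}(\tau_1)=s$, $\mathrm{source}(\tau_{i+1})\in\mathrm{target}(\tau_i)$, $t\in\mathrm{target}(\tau_m)$. $D$ is a cycle from $s$ if it is connected from $s$ and $\mathrm{source}(D)=\mathrm{target}(D)$; a cycle is a cycle from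 some state. $D$ is a run if it is connected from $s_0$ and $\mathrm{source}(D)=\mathrm{target}(D)+\{s_0\}$. A simple cycle is a nonzero cycle that cannot be written as a sum of smaller nonzero cycles. A skeleton run is a run $D$ which cannot be written as $D=D_1+C$ with $D_1$ a run, $C$ a nonzero cycle, and $\mathrm{supp}(D_1)=\mathrm{supp}(D)$. *)

(* Defs.v *)
From mathcomp Require Import all_boot.
Set Implicit Arguments. Unset Strict Implicit. Unset Printing Implicit Defensive.

(* The finite set delta of
   transitions is represented by a finite index type [trans] together with the
   three projections; [trans_inj] makes delta a genuine set of triples. *)
Record grammar := Grammar {
  alph : finType;
  st : finType;
  s0 : st;
  trans : finType;
  src : trans -> st;
  outp : trans -> {ffun alph -> nat};
  tgt : trans -> {ffun st -> nat};
  trans_inj : injective (fun t => (src t, outp t, tgt t));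
  every_state_source : forall s : st, exists t : trans, src t = s;
  outp_small : forall t : trans, \sum_(x : alph) outp t x <= 1;
  tgt_small : forall t : trans, \sum_(x : st) tgt t x <= 2
}.

Section Defs.
Variable G : grammar.

Definition normv (X : finType) (v : {ffun X -> nat}) : nat := \max_(x : X) v x.

Definition addv (X : finType) (u v : {ffun X -> nat}) : {ffun X -> nat} :=
  [ffun x => u x + v x].

Definition sourceD (D : {ffun trans G -> nat}) : {ffun st G -> nat} :=
  [ffun s => \sum_(t : trans G | src t == s) D t].
Definition outD (D : {ffun trans G -> nat}) : {ffun alph G -> nat} :=
  [ffun a => \sum_(t : trans G) D t * outp t a].
Definition targetD (D : {ffun trans G -> nat}) : {ffun st G -> nat} :=
  [ffun s => \sum_(t : trans G) D t * tgt t s].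
Definition suppD (D : {ffun trans G -> nat}) : {set st G} :=
  [set s | 0 < sourceD D s].

Definition connected_from (D : {ffun trans G -> nat}) (s : st G) : Prop :=
  forall u, u \in suppD D ->
    u = s \/
    exists (t1 : trans G) (p : seq (trans G)),
      [/\ all (fun t => 0 < D t) (t1 :: p),
          src t1 = s,
          path (fun a b => 0 < tgt a (src b)) t1 p &
          0 < tgt (last t1 p) u].

Definition cycle_from (D : {ffun trans G -> nat}) (s : st G) : Prop :=
  connected_from D s /\ sourceD D = targetD D.

Definition is_cycle (D : {ffun trans G -> nat}) : Prop :=
  exists s, cycle_from D s.

Definition is_run (D : {ffun trans G -> nat}) : Prop :=
  connected_from D (s0 G) /\
  sourceD D = [ffun s => targetD D s + (s == s0 G)].

Definition zeroD : {ffun trans G -> nat} := [ffun => 0].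

Definition sumD (l : seq {ffun trans G -> nat}) : {ffun trans G -> nat} :=
  foldr (@addv _) zeroD l.

Definition simple_cycle (D : {ffun trans G -> nat}) : Prop :=
  [/\ is_cycle D, D != zeroD &
      ~ exists l : seq {ffun trans G -> nat},
          [/\ 2 <= size l,
              forall C, C \in l -> is_cycle C /\ C != zeroD &
              sumD l = D]].

Definition skeleton_run (D : {ffun trans G -> nat}) : Prop :=
  is_run D /\
  ~ exists D1 C : {ffun trans G -> nat},
      [/\ is_run D1, is_cycle C, C != zeroD, suppD D1 = suppD D &
          D = addv D1 C].

End Defs.

(* Main.v *)
Require Import Defs.
From mathcomp Require Import all_boot zify.
From Stdlib Require Import Classical.
Set Implicit Arguments. Unset Strict Implicit. Unset Printing Implicit Defensive.

Section Main.
Variable G : grammar.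
Notation vec := {ffun trans G -> nat}.

Definition lev (A B : vec) := forall t, A t <= B t.
Definition sz (A : vec) := \sum_t A t.
Definition subv (A B : vec) : vec := [ffun t => A t - B t].
Definition unitv (x : trans G) : vec := [ffun t => (t == x) : nat].
Definition bal (A : vec) := forall s, sourceD A s = targetD A s.

Definition reach (E : vec) (r u : st G) : Prop :=
    u = r \/
    exists (t1 : trans G) (p : seq (trans G)),
      [/\ all (fun t => 0 < E t) (t1 :: p),
          src t1 = r,
          path (fun a b => 0 < tgt a (src b)) t1 p &
          0 < tgt (last t1 p) u].

Lemma sourceD_add (A B : vec) s : sourceD (addv A B) s = sourceD A s + sourceD B s.
Proof. by rewrite !ffunE -big_split /=; apply: eq_bigr => t _; rewrite ffunE. Qed.
Lemma targetD_add (A B : vec) s : targetD (addv A B) s = targetD A s + targetD B s.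
Proof. by rewrite !ffunE -big_split /=; apply: eq_bigr => t _; rewrite ffunE mulnDl. Qed.
Lemma sz_add (A B : vec) : sz (addv A B) = sz A + sz B.
Proof. by rewrite /sz -big_split /=; apply: eq_bigr => t _; rewrite ffunE. Qed.
Lemma sourceD_unit x s : sourceD (unitv x) s = (src x == s).
Proof.
rewrite ffunE big_mkcond (bigD1 x) //= ffunE eqxx big1 ?addn0.
  by case: (src x == s).
by move=> t /negbTE; rewrite ffunE => ->; case: ifP.
Qed.
Lemma targetD_unit x s : targetD (unitv x) s = tgt x s.
Proof.
rewrite ffunE (bigD1 x) //= ffunE eqxx mul1n big1 ?addn0 //.
by move=> t /negbTE; rewrite ffunE => ->.
Qed.
Lemma sz_unit x : sz (unitv x) = 1.
Proof.
rewrite /sz (bigD1 x) //= ffunE eqxx big1 ?addn0 //.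
by move=> t /negbTE; rewrite ffunE => ->.
Qed.
Lemma sourceD_mono (A B : vec) s : lev A B -> sourceD A s <= sourceD B s.
Proof. by move=> H; rewrite !ffunE; apply: leq_sum => t _. Qed.
Lemma targetD_mono (A B : vec) s : lev A B -> targetD A s <= targetD B s.
Proof. by move=> H; rewrite !ffunE; apply: leq_sum => t _; rewrite leq_mul2r H orbT. Qed.
Lemma sz_mono (A B : vec) : lev A B -> sz A <= sz B.
Proof. by move=> H; apply: leq_sum => t _. Qed.
Lemma subvK (A B : vec) : lev B A -> A = addv B (subv A B).
Proof. by move=> H; apply/ffunP => t; rewrite !ffunE subnKC. Qed.
Lemma lev_addl (A B : vec) : lev A (addv A B).
Proof. by move=> t; rewrite ffunE leq_addr. Qed.
Lemma lev_addr (A B : vec) : lev B (addv A B).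
Proof. by move=> t; rewrite ffunE leq_addl. Qed.
Lemma lev_trans (A B C : vec) : lev A B -> lev B C -> lev A C.
Proof. by move=> h1 h2 t; apply: leq_trans (h1 t) (h2 t). Qed.
Lemma lev_sub (A B : vec) : lev (subv A B) A.
Proof. by move=> t; rewrite ffunE leq_subr. Qed.
Lemma sz_eq0 (A : vec) : sz A = 0 -> A = zeroD G.
Proof.
move/eqP; rewrite /sz sum_nat_eq0 => /forallP H.
by apply/ffunP => t; rewrite ffunE; apply/eqP; have := H t.
Qed.
Lemma lev_sz_eq (A B : vec) : lev A B -> sz B <= sz A -> A = B.
Proof.
move=> H Hs; rewrite (subvK H) in Hs *.
rewrite sz_add in Hs.
have : sz (subv B A) = 0 by lia.
by move/sz_eq0 => ->; apply/ffunP => t; rewrite !ffunE addn0.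
Qed.
Lemma pos_source (A : vec) t : 0 < A t -> 0 < sourceD A (src t).
Proof. by move=> H; rewrite ffunE (bigD1 t) //= ltn_addr. Qed.
Lemma source_pos (A : vec) u : 0 < sourceD A u -> exists t, src t = u /\ 0 < A t.
Proof.
rewrite ffunE lt0n sum_nat_eq0 => /forallPn [t]; rewrite negb_imply -lt0n => /andP [/eqP h1 h2].
by exists t.
Qed.
Lemma target_pos (A : vec) u : 0 < targetD A u -> exists t, 0 < A t /\ 0 < tgt t u.
Proof.
rewrite ffunE lt0n sum_nat_eq0 => /forallPn [t]; rewrite /= muln_eq0 negb_or -!lt0n => /andP [h1 h2].
by exists t.
Qed.
Lemma pos_target (A : vec) t u : 0 < A t -> 0 < tgt t u -> 0 < targetD A u.
Proof. by move=> h1 h2; rewrite ffunE (bigD1 t) //= ltn_addr // muln_gt0 h1. Qed.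
Lemma sz_zero : sz (zeroD G) = 0.
Proof. by rewrite /sz big1 // => t _; rewrite ffunE. Qed.
Lemma nonzero_pos (A : vec) : A != zeroD G -> exists t, 0 < A t.
Proof.
move=> H; apply: NNPP => H2; move/eqP: H; apply; apply/ffunP => t; rewrite ffunE.
by apply/eqP; rewrite -leqn0 leqNgt; apply/negP => h; apply: H2; exists t.
Qed.

Lemma reach_mono (E E' : vec) r u : (forall t, 0 < E t -> 0 < E' t) -> reach E r u -> reach E' r u.
Proof.
move=> H [->|[t1 [p [h1 h2 h3 h4]]]]; [by left|right; exists t1, p; split => //].
by apply/allP => t /(allP h1) /H.
Qed.
Lemma reach_ext (E : vec) r v x w : reach E r v -> 0 < E x -> src x = v -> 0 < tgt x w -> reach E r w.
Proof.
move=> [->|[t1 [p [h1 h2 h3 h4]]]] hx hs ht; right.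
  by exists x, [::]; split => //=; rewrite hx.
exists t1, (rcons p x); split => //.
- by rewrite -rcons_cons all_rcons hx.
- by rewrite rcons_path h3 /= hs.
- by rewrite last_rcons.
Qed.

Lemma completion (V : vec) r : (forall s, targetD V s <= sourceD V s) ->
  forall E, lev E V -> (forall s, sourceD E s <= targetD E s) ->
  (forall u, u \in suppD E -> reach E r u) ->
  exists F, [/\ lev E F, lev F V, bal F & forall u, u \in suppD F -> reach F r u].
Proof.
move=> HV E.
suff: forall k E, sz V - sz E <= k -> lev E V -> (forall s, sourceD E s <= targetD E s) ->
  (forall u, u \in suppD E -> reach E r u) ->
  exists F, [/\ lev E F, lev F V, bal F & forall u, u \in suppD F -> reach F r u].
  by move=> H; apply: (H _ E (leqnn _)).
move=> {E} k; elim: k => [|k IH] E hk hEV hst hr.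
  case: (classic (bal E)) => [hb|hnb]; first by exists E; split.
  have hE : E = V by apply: (lev_sz_eq hEV); lia.
  exfalso; apply: hnb => s; apply/eqP; rewrite eqn_leq hst /=; rewrite hE; apply: HV.
case: (classic (bal E)) => [hb|hnb]; first by exists E; split.
have [u hu] := not_all_ex_not _ _ hnb.
have hlt : sourceD E u < targetD E u by rewrite ltn_neqAle hst andbT; apply/eqP.
have hVu : sourceD E u < sourceD V u.
  by apply: (leq_trans hlt); apply: leq_trans (HV u); apply: targetD_mono.
have [x [hx1 hx2]] : exists x, src x = u /\ E x < V x.
  apply: NNPP => hn; move: hVu; rewrite ltnNge => /negP; apply.
  rewrite !ffunE; apply: leq_sum => t /eqP ht; rewrite leqNgt; apply/negP => h.
  by apply: hn; exists t.
pose E' := addv E (unitv x).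
have hE'V : lev E' V.
  move=> t; rewrite !ffunE; case: eqP => [->|_]; first by rewrite addn1.
  by rewrite addn0.
have hsz' : sz E' = (sz E).+1 by rewrite sz_add sz_unit addn1.
have [F [h1 h2 h3 h4]] : exists F, [/\ lev E' F, lev F V, bal F & forall u, u \in suppD F -> reach F r u].
  apply: IH => //.
  - have := sz_mono hE'V; lia.
  - move=> s; rewrite sourceD_add targetD_add sourceD_unit.
    case: eqP => [<-|_]; first by rewrite hx1 addn1; apply: leq_trans (leq_addr _ _).
    by rewrite addn0; apply: leq_trans (hst s) (leq_addr _ _).
  - move=> w; rewrite inE sourceD_add sourceD_unit.
    have hm : forall t, 0 < E t -> 0 < E' t by move=> t ht; rewrite ffunE ltn_addr.
    case: (posnP (sourceD E w)) => [h0|hp] /=.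
      rewrite h0 add0n lt0b hx1 => /eqP <-.
      have [t [ht1 ht2]] := target_pos (leq_ltn_trans (leq0n _) hlt).
      apply: (reach_mono hm); apply: (reach_ext _ ht1 (erefl _) ht2).
      by apply: hr; rewrite inE; apply: pos_source.
    by move=> _; apply: (reach_mono hm); apply: hr; rewrite inE.
by exists F; split => //; apply: lev_trans (lev_addl _ _) h1.
Qed.

Lemma sum_ind_src (x : trans G) s : \sum_(t | src t == s) ((x == t) : nat) = (src x == s).
Proof.
have := sourceD_unit x s; rewrite ffunE => <-; apply: eq_bigr => t _.
by rewrite ffunE eq_sym.
Qed.
Lemma sum_ind_tgt (x : trans G) s : \sum_t ((x == t) : nat) * tgt t s = tgt x s.
Proof.
have := targetD_unit x s; rewrite ffunE => <-; apply: eq_bigr => t _.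
by rewrite ffunE eq_sym.
Qed.
Lemma sum_ind (x : trans G) : \sum_t ((x == t) : nat) = 1.
Proof.
have := sz_unit x; rewrite /sz => <-; apply: eq_bigr => t _.
by rewrite ffunE eq_sym.
Qed.
Lemma sum_shift (F : nat -> nat) m : F m = F 0 -> \sum_(l < m) F l.+1 = \sum_(l < m) F l.
Proof.
case: m => [|m] h; first by rewrite !big_ord0.
by rewrite big_ord_recr big_ord_recl /= h addnC; congr (_ + _); apply: eq_bigr => l _; rewrite lift0.
Qed.

Lemma fcycle (V : vec) : V != zeroD G -> (forall q, 0 < sourceD V q -> 0 < targetD V q) ->
  exists E r, [/\ lev E V, E != zeroD G, (forall s, sourceD E s <= targetD E s),
    sz E <= #|st G| & forall u, u \in suppD E -> reach E r u].
Proof.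
move=> hV H.
have [t0 ht0] := nonzero_pos hV.
pose pt q := [pick t | (0 < V t) && (0 < tgt t q)].
pose tau q := odflt t0 (pt q).
pose f q := src (tau q).
have Htau : forall q, 0 < sourceD V q -> 0 < V (tau q) /\ 0 < tgt (tau q) q.
  move=> q hq; rewrite /tau /pt; case: pickP => [t /andP [h1 h2] | hn] //=.
  exfalso; have [t [ht1 ht2]] := target_pos (H q hq); have := hn t; by rewrite ht1 ht2.
have Hf : forall q, 0 < sourceD V q -> 0 < sourceD V (f q).
  by move=> q /Htau [h1 _]; apply: pos_source.
pose y := src t0.
have Hit : forall i, 0 < sourceD V (iter i f y).
  elim=> [|i IH] /=; [exact: pos_source | exact: Hf].
have [i [j [hij hiter]]] : exists i j, i < j /\ iter i f y = iter j f y.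
  apply: NNPP => hn.
  have inj : injective (fun i : 'I_(#|st G|.+1) => iter i f y).
    move=> a b /= hab; apply/val_inj => /=.
    case: (ltngtP a b) => // hab2; exfalso; apply: hn.
      by exists a, b.
    by exists b, a.
  by have := leq_card _ inj; rewrite card_ord ltnn.
pose x := iter i f y.
have hx : iter (j - i) f x = x by rewrite /x -iterD subnK ?(ltnW hij).
have Hitx : forall l, 0 < sourceD V (iter l f x) by move=> l; rewrite /x -iterD.
have exP : exists m, (0 < m) && (iter m f x == x).
  by exists (j - i); rewrite subn_gt0 hij hx eqxx.
case: (ex_minnP exP) => m /andP [hm0 /eqP hmx] hmin.
have hdist : forall a b, a < b -> b < m -> iter a.+1 f x != iter b.+1 f x.
  move=> a b hab hbm; apply/eqP => he.
  have : m <= m - b.+1 + a.+1.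
    apply: hmin; apply/andP; split; first by lia.
    by rewrite iterD he -iterD subnK // hmx.
  lia.
have hinj : forall a b, a < m -> b < m -> iter a.+1 f x = iter b.+1 f x -> a = b.
  move=> a b ha hb he; case: (ltngtP a b) => // h; exfalso.
    by move: (hdist _ _ h hb); rewrite he eqxx.
  by move: (hdist _ _ h ha); rewrite he eqxx.
pose E : vec := [ffun t => \sum_(l < m) ((tau (iter l f x) == t) : nat)].
have hE1 : forall l : 'I_m, E (tau (iter l f x)) = 1.
  move=> l; rewrite ffunE (bigD1 l) //= eqxx big1 ?addn0 // => l' hl'.
  apply/eqP; rewrite eqb0; apply/negP => /eqP he.
  have : f (iter l' f x) = f (iter l f x) by rewrite /f he.
  rewrite -!iterS => /hinj => /(_ (ltn_ord l') (ltn_ord l)) he2.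
  by move: hl'; rewrite -(inj_eq val_inj) /= he2 eqxx.
have hE0 : forall t, (forall l : 'I_m, tau (iter l f x) != t) -> E t = 0.
  by move=> t ht; rewrite ffunE big1 // => l _; rewrite (negbTE (ht l)).
have hsrc : forall s, sourceD E s = \sum_(l < m) ((iter l.+1 f x == s) : nat).
  move=> s; rewrite ffunE; under eq_bigr do rewrite ffunE.
  by rewrite exchange_big /=; apply: eq_bigr => l _; rewrite sum_ind_src.
have htgt : forall s, targetD E s = \sum_(l < m) tgt (tau (iter l f x)) s.
  move=> s; rewrite ffunE; under eq_bigr do rewrite ffunE big_distrl /=.
  by rewrite exchange_big /=; apply: eq_bigr => l _; rewrite sum_ind_tgt.
exists E, x; split.
- move=> t; case: (boolP [exists l : 'I_m, tau (iter l f x) == t]).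
    move=> /existsP [l /eqP <-]; rewrite hE1.
    by have [h1 _] := Htau _ (Hitx l).
  move=> hn; rewrite hE0 // => l; apply/negP => hl; move/negP: hn; apply.
  by apply/existsP; exists l.
- apply/eqP => h0; have := hE1 (Ordinal hm0); by rewrite h0 ffunE.
- move=> s; rewrite hsrc htgt (@sum_shift (fun l => ((iter l f x == s) : nat)) m); last by rewrite hmx.
  apply: leq_sum => l _; case: eqP => [<-|] //=.
  by have [_ h2] := Htau _ (Hitx l).
- rewrite /sz; under eq_bigr do rewrite ffunE.
  rewrite exchange_big /=; under eq_bigr do rewrite sum_ind.
  rewrite sum1_card card_ord.
  have inj : injective (fun l : 'I_m => iter l.+1 f x).
    by move=> a b he; apply: val_inj; exact: (hinj _ _ (ltn_ord a) (ltn_ord b) he).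
  by have := leq_card _ inj; rewrite card_ord.
- have hd : forall d, d <= m -> reach E x (iter (m - d) f x).
    elim=> [|d IH] hd; first by rewrite subn0 hmx; left.
    have hj : m - d.+1 < m by lia.
    have [_ h2] := Htau _ (Hitx (m - d.+1)).
    apply: (reach_ext (IH (ltnW hd)) _ _ h2).
      by rewrite (hE1 (Ordinal hj)).
    by have -> : m - d = (m - d.+1).+1 by lia.
  move=> u; rewrite inE hsrc lt0n sum_nat_eq0 => /forallPn [l] /=.
  rewrite eqb0 negbK => /eqP <-.
  have := hd (m - l.+1) (leq_subr _ _); rewrite subKn //.
Qed.

Definition NB (V : vec) := forall F, lev F V -> bal F -> F = zeroD G.

Lemma lev_nonzero (E F : vec) : lev E F -> E != zeroD G -> F != zeroD G.
Proof.
move=> h hE; have [t ht] := nonzero_pos hE; apply/eqP => hF.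
by have := leq_trans ht (h t); rewrite hF ffunE.
Qed.

Lemma unproduced (V : vec) (P : st G -> nat) :
  (forall s, sourceD V s = targetD V s + P s) -> NB V -> V != zeroD G ->
  exists q, 0 < sourceD V q /\ targetD V q = 0.
Proof.
move=> hRE hNB hV; apply: NNPP => hn.
have H : forall q, 0 < sourceD V q -> 0 < targetD V q.
  move=> q hq; rewrite lt0n; apply/eqP => h; apply: hn; by exists q.
have [E [r [h1 h2 h3 h4 h5]]] := fcycle hV H.
have HV : forall s, targetD V s <= sourceD V s by move=> s; rewrite hRE leq_addr.
have [F [f1 f2 f3 f4]] := completion HV h1 h3 h5.
have := hNB F f2 f3 => hF.
by move: (lev_nonzero f1 h2); rewrite hF eqxx.
Qed.

Lemma supp0 (V : vec) : #|suppD V| <= 0 -> V = zeroD G.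
Proof.
rewrite leqn0 cards_eq0 => /eqP h; apply/ffunP => t; rewrite ffunE.
apply/eqP; rewrite -leqn0 leqNgt; apply/negP => ht.
have : src t \in suppD V by rewrite inE; apply: pos_source.
by rewrite h inE.
Qed.

Lemma nb_bound k : forall (V : vec) (P : st G -> nat), #|suppD V| <= k ->
  (forall s, sourceD V s = targetD V s + P s) -> NB V -> sz V <= 4 ^ k * \sum_s P s.
Proof.
elim: k => [|k IH] V P hk hRE hNB.
  by rewrite (supp0 hk) sz_zero.
case: (eqVneq V (zeroD G)) => [->|hV]; first by rewrite sz_zero.
have [q [hq1 hq2]] := unproduced hRE hNB hV.
pose V' : vec := [ffun t => if src t == q then 0 else V t].
pose P' s := if s == q then 0 else P s + \sum_(t | src t == q) V t * tgt t s.
have hV'V : lev V' V by move=> t; rewrite ffunE; case: ifP.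
have hsrc' : forall s, sourceD V' s = if s == q then 0 else sourceD V s.
  move=> s; rewrite !ffunE; case: eqP => [->|hs].
    by rewrite big1 // => t /eqP ht; rewrite ffunE ht eqxx.
  apply: eq_bigr => t /eqP ht; rewrite ffunE ht; case: eqP => //.
have htgt' : forall s, targetD V s = targetD V' s + \sum_(t | src t == q) V t * tgt t s.
  move=> s; rewrite !ffunE (big_mkcond (fun t => src t == q)) -big_split /=; apply: eq_bigr => t _.
  by rewrite ffunE; case: ifP => _; rewrite ?mul0n ?add0n ?addn0.
have hRE' : forall s, sourceD V' s = targetD V' s + P' s.
  move=> s; rewrite hsrc' /P'; case: eqP => [->|hs].
    by have := targetD_mono q hV'V; rewrite hq2 leqn0 => /eqP ->.
  by rewrite hRE htgt'; lia.
have hNB' : NB V' by move=> F hF; apply: hNB; apply: lev_trans hF hV'V.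
have hcard : #|suppD V'| <= k.
  have : suppD V' \proper suppD V.
    apply/properP; split.
      by apply/subsetP => s; rewrite !inE => h; exact: (leq_trans h (sourceD_mono s hV'V)).
    by exists q; rewrite !inE // hsrc' eqxx.
  by move/proper_card => h; lia.
have hIH := IH V' P' hcard hRE' hNB'.
have hPq : sourceD V q = P q by rewrite hRE hq2.
have hPq2 : P q <= \sum_s P s by rewrite (bigD1 q) //= leq_addr.
have hP' : \sum_s P' s <= 3 * \sum_s P s.
  have : \sum_s P' s <= \sum_s P s + \sum_s \sum_(t | src t == q) V t * tgt t s.
    rewrite -big_split /=; apply: leq_sum => s _; rewrite /P'; case: eqP => //.
  rewrite exchange_big /=.
  have : \sum_(t | src t == q) \sum_s V t * tgt t s <= 2 * sourceD V q.
    rewrite ffunE big_distrr /=; apply: leq_sum => t _.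
    by rewrite -big_distrr /= mulnC leq_mul2r tgt_small orbT.
  lia.
have hszV : sz V = sourceD V q + sz V'.
  rewrite /sz ffunE addnC (big_mkcond (fun t => src t == q)) -big_split /=; apply: eq_bigr => t _.
  by rewrite ffunE; case: ifP; rewrite ?addn0.
have h4 : 0 < 4 ^ k by rewrite expn_gt0.
rewrite hszV expnS.
nia.
Qed.

Definition irr (C : vec) := [/\ C != zeroD G, bal C & forall F, lev F C -> bal F -> F = zeroD G \/ F = C].

Lemma sz_pos (E : vec) : E != zeroD G -> 0 < sz E.
Proof. by move=> /nonzero_pos [t ht]; rewrite /sz (bigD1 t) //= ltn_addr. Qed.

Lemma sum_target (E : vec) : \sum_s targetD E s <= 2 * sz E.
Proof.
under eq_bigr do rewrite ffunE.
rewrite exchange_big /sz big_distrr /=; apply: leq_sum => t _.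
by rewrite -big_distrr /= mulnC leq_mul2r tgt_small orbT.
Qed.

Lemma bal_sub (E C : vec) : bal E -> bal C -> lev C E -> bal (subv E C).
Proof.
move=> hE hC hle s; have := hE s; rewrite {1 2}(subvK hle) sourceD_add targetD_add hC; lia.
Qed.

Lemma irr_bound (C : vec) : irr C -> sz C <= #|st G| + 4 ^ #|st G| * (2 * #|st G|).
Proof.
move=> [hnz hbal hirr].
have [E [r [h1 h2 h3 h4 h5]]] : exists E r, [/\ lev E C, E != zeroD G, (forall s, sourceD E s <= targetD E s),
    sz E <= #|st G| & forall u, u \in suppD E -> reach E r u].
  by apply: fcycle => // q; rewrite hbal.
pose W := subv C E.
have hC : C = addv E W by apply: subvK.
have hRE : forall s, sourceD W s = targetD W s + (targetD E s - sourceD E s).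
  move=> s; have := hbal s; rewrite hC sourceD_add targetD_add; have := h3 s; lia.
have hNB : NB W.
  move=> F hF hbF; have [//|hFC] := hirr F (lev_trans hF (lev_sub _ _)) hbF.
  have := sz_mono hF; rewrite hFC {1}hC sz_add; have := sz_pos h2; lia.
have hP : \sum_s (targetD E s - sourceD E s) <= 2 * #|st G|.
  apply: leq_trans (_ : \sum_s targetD E s <= _).
    by apply: leq_sum => s _; apply: leq_subr.
  by apply: leq_trans (sum_target E) _; rewrite leq_mul2l h4 orbT.
have hW := nb_bound (max_card (suppD W)) hRE hNB.
rewrite hC sz_add.
apply: leq_add => //; apply: leq_trans hW _; rewrite leq_mul2l hP orbT //.
Qed.

Lemma extract_cycle (E : vec) : E != zeroD G -> bal E -> exists C, [/\ lev C E, C != zeroD G & is_cycle C].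
Proof.
move=> hE hb.
have hp : forall q, 0 < sourceD E q -> 0 < targetD E q by move=> q; rewrite hb.
have [E0 [r [h1 h2 h3 h4 h5]]] := fcycle hE hp.
have HV : forall s, targetD E s <= sourceD E s by move=> s; rewrite hb.
have [F [f1 f2 f3 f4]] := completion HV h1 h3 h5.
exists F; split => //; first exact: lev_nonzero f1 h2.
exists r; split; first exact: f4.
by apply/ffunP => s; rewrite f3.
Qed.

Lemma cycle_bal (C : vec) : is_cycle C -> bal C.
Proof. by case=> r [_ h] s; rewrite h. Qed.

Lemma addv0 (A : vec) : addv A (zeroD G) = A.
Proof. by apply/ffunP => t; rewrite !ffunE addn0. Qed.

Lemma sumD_cat (l1 l2 : seq vec) : sumD (l1 ++ l2) = addv (sumD l1) (sumD l2).
Proof.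
elim: l1 => [|x l1 IH] /=; first by apply/ffunP => t; rewrite !ffunE add0n.
by rewrite /sumD /= -/(sumD _) IH; apply/ffunP => t; rewrite !ffunE addnA.
Qed.

Lemma cld m : forall (E : vec), sz E <= m -> E != zeroD G -> bal E ->
  exists l, [/\ 0 < size l, forall C, C \in l -> is_cycle C /\ C != zeroD G & sumD l = E].
Proof.
elim: m => [|m IH] E hm hE hb.
  by have := sz_pos hE; lia.
have [C [c1 c2 c3]] := extract_cycle hE hb.
pose W := subv E C.
have hEW : E = addv C W by apply: subvK.
have hbW : bal W := bal_sub hb (cycle_bal c3) c1.
case: (eqVneq W (zeroD G)) => [hW0|hW].
  exists [:: C]; split => //; first by move=> C'; rewrite inE => /eqP ->.
  by rewrite /sumD /= addv0 hEW hW0 addv0.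
have hszW : sz W <= m by move: hm; rewrite hEW sz_add; have := sz_pos c2; lia.
have [l [l1 l2 l3]] := IH W hszW hW hbW.
exists (C :: l); split => //.
  by move=> C'; rewrite inE => /orP [/eqP ->|]; [|apply: l2].
by rewrite /sumD /= -/(sumD _) l3 -hEW.
Qed.

Lemma simple_irr (D : vec) : simple_cycle D -> irr D.
Proof.
move=> [hc hnz hno]; have hb := cycle_bal hc; split => // F hF hbF.
case: (eqVneq F (zeroD G)) => [->|hF0]; first by left.
pose W := subv D F.
have hDW : D = addv F W by apply: subvK.
case: (eqVneq W (zeroD G)) => [hW0|hW]; first by right; rewrite hDW hW0 addv0.
exfalso; apply: hno.
have [l1 [a1 a2 a3]] := cld (leqnn _) hF0 hbF.
have [l2 [b1 b2 b3]] := cld (leqnn _) hW (bal_sub hb hbF hF).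
exists (l1 ++ l2); split.
  by rewrite size_cat; exact: (leq_add a1 b1).
- by move=> C; rewrite mem_cat => /orP [/a2|/b2].
- by rewrite sumD_cat a3 b3 -hDW.
Qed.

Lemma irr_exists m : forall (F : vec), sz F <= m -> F != zeroD G -> bal F -> exists E, lev E F /\ irr E.
Proof.
elim: m => [|m IH] F hm hF hb.
  by have := sz_pos hF; lia.
case: (classic (irr F)) => [hi|hni]; first by exists F; split.
have [F' [h1 h2 h3 h4]] : exists F', [/\ lev F' F, bal F', F' != zeroD G & F' != F].
  apply: NNPP => hn; apply: hni; split => // F' h1 h2.
  case: (eqVneq F' (zeroD G)) => [->|h3]; first by left.
  case: (eqVneq F' F) => [->|h5]; first by right.
  by exfalso; apply: hn; exists F'.
have [E [e1 e2]] : exists E, lev E F' /\ irr E.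
  apply: IH => //.
  have hlt : sz F' < sz F.
    rewrite ltn_neqAle sz_mono // andbT; apply: contraNneq h4 => h.
    by apply/eqP; apply: (lev_sz_eq h1); rewrite h.
  lia.
by exists E; split => //; apply: lev_trans e1 h1.
Qed.

Lemma dec m : forall (V : vec) (P : st G -> nat), sz V <= m ->
  (forall s, sourceD V s = targetD V s + P s) ->
  exists (R : vec) (l : seq vec), [/\ forall t, V t = R t + sumD l t, NB R,
     (forall s, sourceD R s = targetD R s + P s) & forall C, C \in l -> irr C].
Proof.
elim: m => [|m IH] V P hm hRE.
  have hV : V = zeroD G by apply: sz_eq0; lia.
  exists V, [::]; split => //.
  - by move=> t; rewrite /sumD /= ffunE addn0.
  - by move=> F hF _; apply/ffunP => t; have := hF t; rewrite hV !ffunE leqn0 => /eqP.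
case: (classic (NB V)) => [hNB|hNB].
  exists V, [::]; split => //.
  by move=> t; rewrite /sumD /= ffunE addn0.
have [F [f1 f2 f3]] : exists F, [/\ lev F V, bal F & F != zeroD G].
  apply: NNPP => hn; apply: hNB => F h1 h2; apply/eqP; apply: NNPP => h3.
  by apply: hn; exists F; split => //; apply/negP.
have [E [e1 e2]] := irr_exists (leqnn _) f3 f2.
have hEV : lev E V := lev_trans e1 f1.
have [e21 e22 e23] := e2.
pose W := subv V E.
have hVW : V = addv E W by apply: subvK.
have hREW : forall s, sourceD W s = targetD W s + P s.
  by move=> s; have := hRE s; rewrite hVW sourceD_add targetD_add e22; lia.
have hszW : sz W <= m by move: hm; rewrite hVW sz_add; have := sz_pos e21; lia.
have [R [l [r1 r2 r3 r4]]] := IH W P hszW hREW.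
exists R, (E :: l); split => //.
  move=> t; have := r1 t; have := hEV t; rewrite /sumD /= -/(sumD _) !ffunE; lia.
by move=> C; rewrite inE => /orP [/eqP ->|/r4].
Qed.

Definition indT (T : {set trans G}) : vec := [ffun t => (t \in T) : nat].

Lemma reach_closed (E : vec) (K : {set st G}) r u : r \in K ->
  (forall x w, 0 < E x -> src x \in K -> 0 < tgt x w -> w \in K) -> reach E r u -> u \in K.
Proof.
move=> hr hcl [->|[t1 [p [h1 h2 h3 h4]]]] //.
have : src t1 \in K by rewrite h2.
elim: p t1 h1 h3 h4 {h2} => [|t2 p IH] t1 /= h1 h3 h4 hK.
  by apply: (hcl t1) => //; move: h1; rewrite andbT.
move: h1 => /andP [ht1 h1]; move: h3 => /andP [ht12 h3].
by apply: (IH t2) => //; apply: (hcl t1).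
Qed.

Lemma tree_T (D : vec) r : connected_from D r -> exists T : {set trans G},
  [/\ #|T| <= #|st G|, (forall t, t \in T -> 0 < D t) & forall u, u \in suppD D -> reach (indT T) r u].
Proof.
move=> hconn.
suff: forall k (K : {set st G}) (T : {set trans G}), #|st G| - #|K| <= k -> r \in K -> #|T| <= #|K| ->
  (forall t, t \in T -> 0 < D t) -> (forall u, u \in K -> reach (indT T) r u) ->
  exists T : {set trans G},
  [/\ #|T| <= #|st G|, (forall t, t \in T -> 0 < D t) & forall u, u \in suppD D -> reach (indT T) r u].
  move=> H; apply: (H _ [set r] set0 (leqnn _)).
  - by rewrite inE.
  - by rewrite cards0.
  - by move=> t; rewrite inE.
  - by move=> u; rewrite inE => /eqP ->; left.
elim=> [|k IH] K T hk hr hT hpos hreach.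
  all: case: (classic (exists x w, [/\ 0 < D x, src x \in K, 0 < tgt x w & w \notin K])) =>
     [[x [w [x1 x2 x3 x4]]]|hn].
  - exfalso; have := max_card (w |: K); rewrite cardsU1 x4; lia.
  - exists T; split => //; first by apply: leq_trans hT (max_card _).
    move=> u hu; apply: hreach; apply: (reach_closed hr _ (hconn u hu)).
    move=> x w x1 x2 x3; apply: NNPP => x4; apply: hn; exists x, w; split => //; exact/negP.
  - have hmono : forall t, 0 < indT T t -> 0 < indT (x |: T) t.
      by move=> t; rewrite !ffunE !lt0b => h; rewrite in_setU1 h orbT.
    apply: (IH (w |: K) (x |: T)).
    + have := max_card (w |: K); rewrite cardsU1 x4; lia.
    + by rewrite !inE hr orbT.
    + rewrite cardsU1 (cardsU1 w) x4; case: (x \in T); lia.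
    + by move=> t; rewrite !inE => /orP [/eqP ->|/hpos].
    + move=> u; rewrite !inE => /orP [/eqP ->|hu]; last by apply: (reach_mono hmono); apply: hreach.
      apply: (reach_ext (reach_mono hmono (hreach _ x2)) _ (erefl _) x3).
      by rewrite ffunE !inE eqxx.
  - exists T; split => //; first by apply: leq_trans hT (max_card _).
    move=> u hu; apply: hreach; apply: (reach_closed hr _ (hconn u hu)).
    move=> x w x1 x2 x3; apply: NNPP => x4; apply: hn; exists x, w; split => //; exact/negP.
Qed.

Lemma sumD_nth (l : seq vec) t : sumD l t = \sum_(i < size l) (nth (zeroD G) l i) t.
Proof.
elim: l => [|x l IH]; first by rewrite /sumD /= ffunE big_ord0.
by rewrite /sumD /= -/(sumD _) ffunE big_ord_recl /= IH.
Qed.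

Lemma reach_supp (V : vec) r u : (forall s, targetD V s + (s == r) <= sourceD V s) ->
  reach V r u -> 0 < sourceD V u.
Proof.
move=> H [->|[t1 [p [h1 h2 h3 h4]]]].
  by apply: leq_trans (H r); rewrite eqxx addn1.
apply: leq_trans (leq_trans (leq_addr _ _) (H u)).
by apply: (pos_target _ h4); apply: (allP h1); apply: mem_last.
Qed.

Lemma sumD1 k (P : pred 'I_k) (F : 'I_k -> nat) j : P j ->
  \sum_(i < k | P i) F i = F j + \sum_(i < k | P i && (i != j)) F i.
Proof. by move=> h; rewrite (bigD1 j). Qed.
Lemma sumD1T k (F : 'I_k -> nat) j :
  \sum_(i < k) F i = F j + \sum_(i < k | i != j) F i.
Proof. by rewrite (bigD1 j). Qed.

Definition Bc := #|st G| + 4 ^ #|st G| * (2 * #|st G|).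

Lemma skel_bound (D : vec) : skeleton_run D -> sz D <= 4 ^ #|st G| + #|st G| * Bc.
Proof.
move=> [[hconn hRE0] hnot].
have hRE : forall s, sourceD D s = targetD D s + (s == s0 G) by move=> s; rewrite hRE0 ffunE.
have [R [l [r1 r2 r3 r4]]] := dec (leqnn _) hRE.
have hszR : sz R <= 4 ^ #|st G|.
  have := nb_bound (max_card (suppD R)) r3 r2.
  have -> : \sum_s ((s == s0 G) : nat) = 1.
    by rewrite (bigD1 (s0 G)) //= eqxx big1 // => s /negbTE ->.
  by rewrite muln1.
have [T [t1 t2 t3]] := tree_T hconn.
pose k := size l.
pose C := fun i : 'I_k => nth (zeroD G) l i.
have hC : forall i : 'I_k, irr (C i) by move=> i; apply: r4; apply: mem_nth.
have hD : forall t, D t = R t + \sum_(i < k) C i t by move=> t; rewrite r1 sumD_nth.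
have hpriv : forall i : 'I_k, exists x, (x \in T) && (R x + \sum_(j < k | j != i) C j x == 0).
  move=> i; apply: NNPP => hn.
  have hpos : forall x, x \in T -> 0 < R x + \sum_(j < k | j != i) C j x.
    move=> x hx; rewrite lt0n; apply/negP => h; apply: hn; exists x; by rewrite hx h.
  pose D1 : vec := [ffun t => R t + \sum_(j < k | j != i) C j t].
  have hDD : D = addv D1 (C i).
    by apply/ffunP => t; rewrite hD !ffunE (bigD1 i) //= [C i t + _]addnC addnA.
  have [ci1 ci2 ci3] := hC i.
  have hcyc : is_cycle (C i).
    have [C' [c1 c2 c3]] := extract_cycle ci1 ci2.
    by case: (ci3 C' c1 (cycle_bal c3)) => h; [move: c2; rewrite h eqxx | rewrite -h].
  have hRE1 : forall s, sourceD D1 s = targetD D1 s + (s == s0 G).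
    by move=> s; have := hRE s; rewrite hDD sourceD_add targetD_add ci2; lia.
  have hlev : lev D1 D by rewrite hDD; apply: lev_addl.
  have hreach : forall u, u \in suppD D -> reach D1 (s0 G) u.
    move=> u hu; apply: (reach_mono _ (t3 u hu)) => t; rewrite ffunE lt0b => ht.
    by rewrite ffunE; apply: hpos.
  have hsupp : suppD D1 = suppD D.
    apply/setP => u; rewrite !inE; apply/idP/idP => h.
      by apply: leq_trans h (sourceD_mono u hlev).
    apply: (reach_supp _ (hreach u _)); last by rewrite inE.
    by move=> s; rewrite hRE1.
  apply: hnot; exists D1, (C i); split => //.
  split; last by apply/ffunP => s; rewrite ffunE hRE1.
  by move=> u hu; apply: hreach; rewrite -hsupp.
pose rho := fun i : 'I_k => [pick x | (x \in T) && (R x + \sum_(j < k | j != i) C j x == 0)].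
have hrho : forall i, exists2 x, rho i = Some x & (x \in T) && (R x + \sum_(j < k | j != i) C j x == 0).
  move=> i; rewrite /rho; case: pickP => [x hx|hn]; first by exists x.
  by have [x hx] := hpriv i; move: (hn x); rewrite hx.
have hinj : injective rho.
  move=> i j hij; apply: NNPP => hne.
  have [x hx /andP [hxT /eqP hx0]] := hrho i.
  have [y hy /andP [hyT /eqP hy0]] := hrho j.
  move: hij; rewrite hx hy => [[hxy]]; subst y.
  have hCj : C j x = 0.
    have hji : j != i by apply/eqP => h; apply: hne; rewrite h.
    move: hx0; rewrite (@sumD1 k (fun j0 => j0 != i) (fun j0 => C j0 x) j hji); lia.
  by have := t2 x hxT; rewrite hD (@sumD1T k (fun j0 => C j0 x) j) hCj hy0.
have hk : k <= #|T|.
  have h1 : #|[set rho i | i in 'I_k]| = k by rewrite card_imset //; apply: card_ord.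
  have h2 : #|[set Some x | x in T]| = #|T| by rewrite card_imset //; move=> a b [].
  rewrite -h1 -h2; apply: subset_leq_card; apply/subsetP => o /imsetP [i _ ->].
  by have [x hx /andP [hxT _]] := hrho i; rewrite hx; apply: imset_f.
have hszD : sz D = sz R + \sum_(i < k) sz (C i).
  rewrite /sz; under eq_bigr do rewrite hD.
  by rewrite big_split /= exchange_big.
rewrite hszD; apply: leq_add => //.
apply: leq_trans (_ : \sum_(i < k) Bc <= _).
  by apply: leq_sum => i _; apply: irr_bound.
rewrite sum_nat_const card_ord leq_mul2r; apply/orP; right; lia.
Qed.

Lemma norm_le (D : vec) : normv (outD D) <= sz D.
Proof.
rewrite /normv; apply/bigmax_leqP => a _; rewrite ffunE; apply: leq_sum => t _.
have : outp t a <= 1.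
  by apply: leq_trans (outp_small t); rewrite (bigD1 a) //= leq_addr.
by move=> h; rewrite -{2}(muln1 (D t)) leq_mul2l h orbT.
Qed.
End Main.

Theorem lemma6 :
  exists c k : nat, forall (G : grammar) (D : {ffun trans G -> nat}),
    simple_cycle D \/ skeleton_run D ->
    normv (outD D) <= c * 2 ^ (c * #|st G| ^ k).
Proof.
exists 8, 1 => G D H.
apply: leq_trans (norm_le D) _.
have hn : #|st G| < 4 ^ #|st G| by apply: ltn_expl.
have h8 : 2 ^ (8 * #|st G| ^ 1) = (4 ^ #|st G|) ^ 4.
  have e4 : 4 ^ (#|st G| * 4) = 2 ^ (2 * (#|st G| * 4)) by rewrite [RHS]expnM.
  by rewrite expn1 -expnM e4; congr (2 ^ _); lia.
rewrite h8.
move: hn; set N := 4 ^ #|st G|; set n := #|st G| => hn.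
have q2 : N ^ 2 = N * N by rewrite expnS expn1.
have q4 : N ^ 4 = N * N * (N * N) by rewrite !expnS expn0 muln1 !mulnA.
have hN : 1 <= N by lia.
have hB : Bc G <= 3 * (N * N) by rewrite /Bc -/n -/N; nia.
rewrite q4.
case: H => [hs|hk].
  apply: leq_trans (irr_bound (simple_irr hs)) _.
  rewrite -/(Bc G); nia.
apply: leq_trans (skel_bound hk) _; rewrite -/n -/N.
have h1 : n * Bc G <= N * (3 * (N * N)) by apply: leq_mul; lia.
nia.
Qed.
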